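(* Let $K,d,S,N$ be positive integers with $S+2\le N\le d(K-1)+S$, let $C\triangleq d(K-1)+S+1-N$, let $\boldsymbol{\mathcal{N}}=\{\mathcal{N}_g:g\in[G]\}$ be a non-straggler pattern with intersection $\mathcal{I}=\bigcap_{g\in[G]}\mathcal{N}_g$ of size $I=|\mathcal{I}|$, and let $L\triangleq N-S-I$. Let $\alpha_0,\dots,\alpha_{K-1}\in\mathbb{C}$ be data points, $\beta_0,\dots,\beta_{N-1}\in\mathbb{C}$ evaluation points and $\boldsymbol{w}\in\mathbb{C}^K$ a weight vector. Suppose that $$\sum_{k=0}^{K-1}w_k\,P_{\mathcal{I}}(\alpha_k)\,\alpha_k^j=0\quad\text{for all } j\in[C+L],$$ where $P_{\mathcal{I}}(z)\triangleq\prod_{n\in\mathcal{I}}(z-\beta_n)$. Then $$\sum_{k=0}^{K-1}w_k\,P_g(\alpha_k)\,\alpha_k^j=0\quad\text{for all } j\in[C],\ g\in[G],$$ where $P_g(z)\triangleq\prod_{n\in\mathcal{N}_g}(z-\beta_n)$.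
   Context: Notation: for a positive integer $m$, $[m]=\{0,1,\dots,m-1\}$. A non-straggler pattern is a collection $\boldsymbol{\mathcal{N}}=\{\mathcal{N}_g:g\in[G]\}$ of subsets $\mathcal{N}_g\subseteq[N]$, each of cardinality $N-S$. *)

(* Defs.v *)
From mathcomp Require Import all_boot all_order all_algebra.
From mathcomp Require Import complex.
From mathcomp Require Import reals.
Set Implicit Arguments. Unset Strict Implicit. Unset Printing Implicit Defensive.
Import GRing.Theory Num.Theory.
Local Open Scope ring_scope.

Definition Pset (F : nzRingType) (N : nat) (beta : 'I_N -> F)
  (A : {set 'I_N}) (z : F) : F := \prod_(n in A) (z - beta n).

Definition pattern_cap (N G : nat) (Ns : 'I_G -> {set 'I_N}) : {set 'I_N} :=
  \bigcap_(g < G) Ns g.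

(* Main.v *)
Require Import Defs.
From mathcomp Require Import all_boot all_order all_algebra.
From mathcomp Require Import complex.
From mathcomp Require Import reals.
Import GRing.Theory Num.Theory.
Local Open Scope ring_scope.
From mathcomp Require Import zify.

Theorem lemma2 (R : realType) (K d S N G : nat)
  (HK : (0 < K)%N) (Hd : (0 < d)%N) (HS : (0 < S)%N) (HN : (0 < N)%N)
  (HSN : (S + 2 <= N)%N) (HNd : (N <= d * (K - 1) + S)%N)
  (Ns : 'I_G -> {set 'I_N})
  (HNs : forall g : 'I_G, #|Ns g| = (N - S)%N)
  (alpha : 'I_K -> R[i]) (beta : 'I_N -> R[i]) (w : 'I_K -> R[i]) :
  let C := (d * (K - 1) + S + 1 - N)%N in
  let I := #|pattern_cap Ns| in
  let L := (N - S - I)%N in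
  (forall j : nat, (j < C + L)%N ->
     \sum_(k < K) w k * Pset beta (pattern_cap Ns) (alpha k) * alpha k ^+ j = 0) ->
  forall (j : nat) (g : 'I_G), (j < C)%N ->
     \sum_(k < K) w k * Pset beta (Ns g) (alpha k) * alpha k ^+ j = 0.
Proof.
move=> C I L H j g hj.
set A := pattern_cap Ns.
set B := Ns g.
have AB : A \subset B by apply: bigcap_inf.
set q : {poly R[i]} := \prod_(n <- enum (B :\: A)) ('X - (beta n)%:P).
have Hsq : size (q * 'X^j) = (#|B :\: A| + j).+1.
  have qn0 : q != 0 by rewrite -size_poly_eq0 size_prod_XsubC.
  by rewrite size_mulXn // size_prod_XsubC -cardE addnS addnC.
have HBA : #|B :\: A| = L.
  by rewrite cardsD (setIidPr AB) HNs.
have HP : forall z, Pset beta B z * z ^+ j =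
    Pset beta A z * (q * 'X^j).[z].
  move=> z; rewrite /Pset (big_setID (A:=B) A) (setIidPr AB) /= -mulrA.
  congr (_ * _); rewrite hornerM hornerXn /q horner_prod.
  rewrite big_enum /=; congr (_ * _); apply: eq_bigr => n _.
  by rewrite hornerXsubC.
have -> : \sum_(k < K) w k * Pset beta B (alpha k) * alpha k ^+ j =
  \sum_(k < K) \sum_(i < size (q * 'X^j))
     (q * 'X^j)`_i * (w k * Pset beta A (alpha k) * alpha k ^+ i).
  apply: eq_bigr => k _; rewrite -mulrA HP horner_coef mulrA mulr_sumr.
  apply: eq_bigr => i _; by rewrite mulrCA !mulrA.
rewrite exchange_big /=; apply: big1 => i _.
rewrite -mulr_sumr H ?mulr0 //.
have hi : (i < (L + j).+1)%N.
  move: (ltn_ord i); move: (nat_of_ord i) => m; rewrite Hsq HBA //.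
clearbody C L.
apply: (leq_trans hi). rewrite (addnC C) -addnS leq_add2l //.
Qed.
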